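(* Let $(s_n)_{n\ge1}$ be a sequence of positive real numbers with $\lim_{n\to\infty} s_n/n=\infty$. Then there exists an irrational $\beta\in\mathbb R\setminus\mathbb Q$ such that the rotation $T(x)=x+\beta \pmod 1$ of $[0,1)$ satisfies \[\liminf_{n\to\infty} s_n\,\|T^n(x)-y\|=\infty\quad\text{for } \lambda\times\lambda\text{-almost every }(x,y)\in[0,1)^2,\] where $\lambda$ is Lebesgue measure.
   Context: $\|t\|=\min_{m\in\mathbb Z}|t-m|$ denotes the distance from $t\in\mathbb R$ to the nearest integer (the circle metric on $[0,1)$). *)

(* Defs.v *)
From HB Require Import structures.
From mathcomp Require Import all_boot all_order all_algebra.
From mathcomp Require Import all_classical all_reals all_analysis.
Set Implicit Arguments. Unset Strict Implicit. Unset Printing Implicit Defensive.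
Import Order.TTheory GRing.Theory Num.Theory.
Import numFieldNormedType.Exports.
Local Open Scope classical_set_scope.
Local Open Scope ring_scope.

(* ||t|| = min_{m in Z} |t - m|, the distance to the nearest integer
   (the infimum over Z is attained, so inf = min). *)
Definition dist_int {R : realType} (t : R) : R :=
  inf [set `|t - m%:~R| | m in [set: int]].

Definition fract {R : realType} (t : R) : R := t - (Num.floor t)%:~R.

Definition rotation {R : realType} (beta : R) (x : R) : R := fract (x + beta).

(* Main.v *)
Require Import Defs.
From HB Require Import structures.
From mathcomp Require Import all_boot all_order all_algebra.
From mathcomp Require Import all_classical all_reals all_analysis.
From mathcomp Require Import ring lra zify.
From Stdlib Require Import Lia.
Import Order.TTheory GRing.Theory Num.Theory.
Import numFieldNormedType.Exports.
Local Open Scope classical_set_scope.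
Local Open Scope ring_scope.



Section Constr.
Variable R : realType.
Variable Nf : nat -> nat.

Definition pw (n : nat) : R := (2 ^ n)%:R.
Lemma pwD a b : pw (a + b) = pw a * pw b.
Proof. by rewrite /pw expnD natrM. Qed.
Lemma pw_gt0 n : 0 < pw n.
Proof. by rewrite /pw ltr0n expn_gt0. Qed.
Lemma pw_ge1 n : 1 <= pw n.
Proof. by rewrite /pw ler1n expn_gt0. Qed.

Definition Mn (k m : nat) : nat := (k.+1 * 2 ^ (k.*2 + m + 4))%N.
Fixpoint mexp (k : nat) : nat :=
  if k is k'.+1 then (mexp k' + k' + 2 + (Nf (Mn k' (mexp k')) + k'.+1))%N
  else 0%N.
Definition eb (k : nat) : nat :=
  if k is k'.+1 then (Nf (Mn k' (mexp k')) + k'.+1)%N else 0%N.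
Lemma mexpS k : mexp k.+1 = (mexp k + (k + 2 + eb k.+1))%N.
Proof. by rewrite /= !addnA. Qed.
Lemma eb_ge k : (k <= eb k)%N.
Proof. by case: k => //= k; rewrite leq_addl. Qed.

Definition w (k : nat) : R := (pw (mexp k))^-1.
Lemma w_gt0 k : 0 < w k.
Proof. by rewrite invr_gt0 pw_gt0. Qed.
Lemma wS k : w k.+1 = w k / pw (k + 2 + eb k.+1).
Proof. by rewrite /w mexpS pwD invfM. Qed.
Lemma pw_ge2 n : (0 < n)%N -> 2 <= pw n.
Proof.
move=> n0; rewrite /pw ler_nat.
by rewrite -{1}(expn1 2) leq_exp2l.
Qed.
Lemma w2 k : 2 * w k.+1 <= w k.
Proof.
rewrite wS; have P2 : 2 <= pw (k + 2 + eb k.+1) by apply: pw_ge2; rewrite addn2 addSn.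
have := w_gt0 k; move: P2; set P := pw _ => P2 w0.
rewrite mulrA ler_pdivrMr; last by lra.
nra.
Qed.
Lemma pwmw k : pw (mexp k) * w k = 1.
Proof. by rewrite /w mulfV // gt_eqF // pw_gt0. Qed.

Lemma geo (v : nat -> R) : (forall i, 0 <= v i) -> (forall i, 2 * v i.+1 <= v i) ->
  forall a n, \sum_(a <= i < a + n) v i + 2 * v (a + n)%N <= 2 * v a.
Proof.
move=> v0 v2 a; elim=> [|n IH]; first by rewrite addn0 big_geq // add0r.
rewrite addnS big_nat_recr /= ?leq_addr //.
have := v2 (a + n)%N; lra.
Qed.

Definition psum (n : nat) : R := \sum_(0 <= i < n) w i.
Definition beta : R := limn psum.

Lemma psum_diff a n : psum (a + n) - psum a = \sum_(a <= i < a + n) w i.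
Proof. by rewrite /psum (@big_cat_nat _ _ _ a 0 (a + n)) ?leq_addr //= addrAC subrr add0r. Qed.

Lemma psum_nd : {homo psum : n m / (n <= m)%N >-> n <= m}.
Proof.
move=> n m /subnK <-; rewrite addnC; have := psum_diff n (m - n).
move=> h; rewrite -subr_ge0 h; apply: sumr_ge0 => i _; exact: ltW (w_gt0 _).
Qed.

Lemma psum_ub n : psum n <= 2.
Proof.
have := @geo w (fun i => ltW (w_gt0 i)) w2 0 n; rewrite add0n /psum.
have := w_gt0 n; rewrite /w /= /pw expn0 invr1; lra.
Qed.

Lemma psum_cvg : cvgn psum.
Proof.
apply: nondecreasing_is_cvgn; first exact: psum_nd.
by exists 2 => _ [n _ <-]; exact: psum_ub.
Qed.

Lemma tail_bounds k : w k.+1 <= beta - psum k.+1 <= 2 * w k.+1.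
Proof.
apply/andP; split.
- rewrite lerBrDr; apply: limr_ge; first exact: psum_cvg.
  exists k.+2 => // n /= hn.
  have hn' : n = (k.+1 + (n - k.+1))%N by rewrite subnKC // ltnW.
  have := psum_diff k.+1 (n - k.+1); rewrite -hn' => hd.
  have hs : w k.+1 <= \sum_(k.+1 <= i < n) w i.
    rewrite big_ltn //= lerDl; apply: sumr_ge0 => i _; exact: ltW (w_gt0 _).
  lra.
- rewrite lerBlDl; apply: limr_le; first exact: psum_cvg.
  exists k.+1 => // n /= hn.
  have hn' : n = (k.+1 + (n - k.+1))%N by rewrite subnKC.
  have := psum_diff k.+1 (n - k.+1); rewrite -hn' => hd.
  have := @geo w (fun i => ltW (w_gt0 i)) w2 k.+1 (n - k.+1).
  rewrite -hn'; have := w_gt0 n; lra.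
Qed.

Fixpoint Qn (k : nat) : nat :=
  if k is k'.+1 then (Qn k' * 2 ^ (k' + 2 + eb k'.+1) + 1)%N else 1%N.

Lemma psum_dyadic k : psum k.+1 = (Qn k)%:R * w k.
Proof.
elim: k => [|k IH].
  by rewrite /psum big_nat1 /= mul1r.
rewrite /psum big_nat_recr //= -/(psum k.+1) IH.
rewrite natrD natrM mulrDl mul1r; congr (_ + _).
rewrite wS; field; exact: lt0r_neq0 (pw_gt0 _).
Qed.

Lemma beta_ge1 : 1 <= beta.
Proof.
have := tail_bounds 0; rewrite psum_dyadic /= mul1r /w /= /pw expn0 invr1.
have := w_gt0 1; lra.
Qed.

Lemma beta_irr : (@irrational R) beta.
Proof.
move=> /rationalP [a [b hb]].
have b0 : (b != 0)%N.
  apply/eqP => b0; move: hb; rewrite b0 invr0 mulr0 => hb.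
  by have := beta_ge1; rewrite hb ler10.
pose k := b.
have hbeta : b%:R * beta = a%:~R.
  by rewrite hb mulrCA mulfV ?mulr1 // pnatr_eq0.
pose X : int := (a * (2 ^ mexp k)%:Z - b%:Z * (Qn k)%:Z)%R.
have hX : X%:~R = b%:R * pw (mexp k) * (beta - psum k.+1) :> R.
  have e1 : ((2 ^ mexp k)%:Z)%:~R = pw (mexp k) :> R by [].
  have e2 : (b%:Z)%:~R = b%:R :> R by [].
  have e3 : ((Qn k)%:Z)%:~R = (Qn k)%:R :> R by [].
  rewrite psum_dyadic /X intrD intrN !intrM e1 e2 e3 -hbeta.
  have := pwmw k; move: (pw (mexp k)) (w k) => P W hPW.
  rewrite mulrBr mulrA; congr (_ - _); first by rewrite mulrAC.
  by rewrite mulrAC -(mulrA _ P W) hPW mulr1.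
have [hl hu] := andP (tail_bounds k).
have hpos : 0 < X%:~R :> R.
  rewrite hX mulr_gt0 //; first by rewrite mulr_gt0 ?pw_gt0 // ltr0n lt0n.
  by apply: lt_le_trans hl; exact: w_gt0.
have hlt : X%:~R < 1 :> R.
  rewrite hX; apply: (le_lt_trans (y := b%:R * pw (mexp k) * (2 * w k.+1))).
    by rewrite ler_wpM2l // mulr_ge0 ?ler0n ?(ltW (pw_gt0 _)).
  rewrite wS /w.
  rewrite (_ : b%:R * pw (mexp k) * (2 * ((pw (mexp k))^-1 / pw (k + 2 + eb k.+1)))
             = 2 * b%:R / pw (k + 2 + eb k.+1)); last first.
    field; apply/andP; split; apply: lt0r_neq0; exact: pw_gt0.
  rewrite ltr_pdivrMr ?pw_gt0 // mul1r -addnA pwD.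
  have h2 : b%:R < pw k :> R by rewrite /pw ltr_nat ltn_expl.
  have h3 : 2 <= pw (2 + eb k.+1) by apply: pw_ge2; rewrite add2n.
  have h4 : 0 <= b%:R :> R by [].
  have := pw_gt0 k; nra.
have : (0 < X)%R by rewrite -(ltr0z R).
have : (X < 1)%R by rewrite -(ltrz1 R).
lia.
Qed.

End Constr.



Section Block.
Variable R : realType.
Variable Nf : nat -> nat.

Local Notation pw := (@pw R).
Local Notation w := (@w R Nf).
Local Notation mexp := (mexp Nf).
Local Notation eb := (eb Nf).
Local Notation beta := (@beta R Nf).
Local Notation psum := (@psum R Nf).
Local Notation Qn := (Qn Nf).

Definition qn k := (2 ^ mexp k)%N.
Definition rr k : R := w k / pw k.
Definition cen k (j : nat) : R := ((j%:Z - (qn k)%:Z)%:~R) * w k.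
Definition Uk k : set R :=
  \big[setU/set0]_(j < (qn k).*2.+1) `](cen k j - rr k), (cen k j + rr k)[%classic.

Lemma dist_lb (t c : R) : (forall m : int, c <= `|t - m%:~R|) -> c <= dist_int t.
Proof.
move=> H; apply: lb_le_inf.
  by exists `|t - 0%:~R|; exists 0.
by move=> _ [m _ <-]; exact: H m.
Qed.

Lemma iter_rot (b x : R) n :
  exists K : int, iter n (rotation b) x = x + n%:R * b - K%:~R.
Proof.
elim: n => [|n [K IH]]; first by exists 0; rewrite /= mul0r addr0 subr0.
exists (K + Num.floor (iter n (rotation b) x + b))%R.
rewrite iterS /rotation /fract intrD.
move: (Num.floor _) => F; rewrite IH mulrSr; ring.
Qed.

Lemma rr_le k : rr k <= w k.
Proof.
rewrite /rr ler_pdivrMr ?pw_gt0 //; have := pw_ge1 R k; have := w_gt0 R Nf k; nra.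
Qed.

Lemma good_bound k (z : R) : `|z| < 1 -> ~ Uk k z ->
  forall J : int, rr k <= `|z - J%:~R * w k|.
Proof.
move=> hz hU J.
have qw : (qn k)%:R * w k = 1 := pwmw R Nf k.
have w0 := w_gt0 R Nf k.
case: (boolP ((- (qn k)%:Z <= J) && (J <= (qn k)%:Z)))%R => hJ.
- case/andP: hJ => hJ1 hJ2.
  pose jn := `|(J + (qn k)%:Z)%R|%N.
  have hjn : (jn%:Z = J + (qn k)%:Z)%R by rewrite /jn gez0_abs //; lia.
  have hjlt : (jn < (qn k).*2.+1)%N by lia.
  rewrite leNgt; apply/negP => hlt; apply: hU.
  apply: (@bigsetU_sup R jn _ (fun j : nat => `](cen k j - rr k), (cen k j + rr k)[%classic) hjlt).
  have -> : cen k jn = J%:~R * w k.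
    by rewrite /cen (_ : (jn%:Z - (qn k)%:Z = J)%R) //; rewrite hjn addrK.
  rewrite ltr_distl in hlt.
  by rewrite /= in_itv /= hlt.
- have hJ' : ((qn k)%:Z + 1 <= `|J|)%R by lia.
  have hJr : ((qn k)%:R + 1 <= `|J%:~R| :> R).
    rewrite -intr_norm (_ : (qn k)%:R + 1 = ((qn k)%:Z + 1)%:~R :> R).
      by rewrite ler_int.
    by rewrite intrD.
  have := lerB_dist (J%:~R * w k) z.
  rewrite normrM (gtr0_norm w0) distrC => h.
  have := rr_le k; nra.
Qed.

Variable s : nat -> R.
Hypothesis Hf : forall M n, (Nf M <= n)%N -> M%:R <= s n / n%:R.

Lemma block k z n t : `|z| < 1 -> ~ Uk k.+1 z ->
  (2 ^ eb k.+1 <= n)%N -> (n < 2 ^ eb k.+2)%N ->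
  (exists Ki : int, t = z + n%:R * beta - Ki%:~R) ->
  k.+1%:R <= s n * dist_int t.
Proof.
move=> hz hU hn1 hn2 [Ki ->].
set l := k.+1.
set c := w l / pw l / 2.
have w0 := w_gt0 R Nf l.
have pwl0 := pw_gt0 R l.
have rrc : rr l = 2 * c by rewrite /rr /c; field.
have hw1 : w l.+1 = w l / (pw l * 4 * pw (eb l.+1)).
  by rewrite wS !pwD.
have hnr : n%:R <= pw (eb l.+1) by rewrite /pw ler_nat ltnW.
have [tl tu] := andP (tail_bounds R Nf l).
set e := beta - psum l.+1 in tl tu.
have he0 : 0 <= n%:R * e by rewrite mulr_ge0 // (le_trans _ tl) // ltW // w_gt0.
have heb : n%:R * e <= c.
  apply: (le_trans (y := pw (eb l.+1) * (2 * w l.+1))).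
    by apply: ler_pM => //; rewrite (le_trans _ tl) // ltW // w_gt0.
  rewrite hw1 /c; have := pw_gt0 R (eb l.+1); move: (pw (eb l.+1)) => P hP.
  rewrite le_eqVlt; apply/orP; left; apply/eqP; field.
  by apply/andP; split; apply: lt0r_neq0.
have hdist : c <= dist_int (z + n%:R * beta - Ki%:~R).
  apply: dist_lb => m.
  pose M := (Ki + m)%R.
  pose J := (M * (qn l)%:Z - n%:Z * (Qn l)%:Z)%R.
  have hg := @good_bound l z hz hU J.
  have eq : z + n%:R * beta - Ki%:~R - m%:~R = (z - J%:~R * w l) + n%:R * e.
    rewrite /e /J /M psum_dyadic.
    have e1 : ((qn l)%:Z)%:~R = (qn l)%:R :> R by [].
    have e2 : (n%:Z)%:~R = n%:R :> R by [].
    have e3 : ((Qn l)%:Z)%:~R = (Qn l)%:R :> R by [].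
    rewrite !intrD !intrN !intrM e1 e2 e3.
    have := pwmw R Nf l; rewrite -/(qn l); rewrite /pw /qn.
    move: ((2 ^ mexp l)%:R) (w l) => Q W hQW.
    rewrite mulrBl -mulrA hQW mulr1.
    ring.
  rewrite eq.
  have := lerB_dist (z - J%:~R * w l) (- (n%:R * e)).
  rewrite opprK normrN (ger0_norm he0) => h.
  lra.
have npos : (0 < n)%N by apply: leq_trans hn1; rewrite expn_gt0.
have hs : (Mn k (mexp k))%:R * n%:R <= s n.
  rewrite -ler_pdivlMr ?ltr0n //; apply: Hf.
  apply: leq_trans hn1; apply: ltnW; apply: leq_trans (ltn_expl _ (leqnn 2)).
  by rewrite /= leq_addr.
have hM : (Mn k (mexp k))%:R * pw (eb l) * c = l%:R.
  have E : pw (k.*2 + mexp k + 4) * pw (eb l) = pw (mexp l) * pw l * pw 1.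
    by rewrite -!pwD mexpS; congr pw; rewrite /l; lia.
  have -> : (Mn k (mexp k))%:R = l%:R * pw (k.*2 + mexp k + 4) :> R.
    by rewrite /Mn natrM.
  rewrite -(mulrA l%:R) E /c /w.
  have -> : pw 1 = 2 by rewrite /pw expn1.
  have := pw_gt0 R (mexp l); move: (pw (mexp l)) => A hA.
  field; apply/andP; split; apply: lt0r_neq0 => //.
have hc0 : 0 <= c by rewrite /c !divr_ge0 // ltW.
have hMn : 0 <= (Mn k (mexp k))%:R :> R by [].
have hpn : pw (eb l) <= n%:R by rewrite /pw ler_nat.
rewrite -hM.
apply: (le_trans (y := s n * c)); last by rewrite ler_wpM2l // (le_trans _ hs) // mulr_ge0.
apply: ler_wpM2r => //.
apply: le_trans hs; exact: ler_wpM2l.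
Qed.

End Block.



Section Point.
Variable R : realType.
Variable Nf : nat -> nat.
Variable s : nat -> R.
Hypothesis Hf : forall M n, (Nf M <= n)%N -> M%:R <= s n / n%:R.

Local Notation beta := (@beta R Nf).
Local Notation eb := (eb Nf).

Lemma pointwise x y : 0 <= x < 1 -> 0 <= y < 1 -> forall K : nat,
  (forall k, (K <= k)%N -> ~ Uk R Nf k (x - y)) ->
  limn_einf (fun n => (s n * dist_int (iter n (rotation beta) x - y))%:E) = +oo%E.
Proof.
move=> /andP[hx0 hx1] /andP[hy0 hy1] K hK.
have hz : `|x - y| < 1 by rewrite ltr_norml; apply/andP; split; lra.
apply: (cvg_limn_einf_sup _).1; apply/cvgeryP/cvgryPge => L.
pose Kk := maxn K.+1 (Num.Def.archi_bound `|L|).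
have hL := archi_boundP (normr_ge0 L).
exists (2 ^ eb Kk)%N => // n /= hn.
pose P := fun i => (2 ^ eb i <= n)%N.
have hex : exists i, P i by exists Kk.
have hub : forall i, P i -> (i <= n)%N.
  move=> i Pi; apply: leq_trans Pi; apply: leq_trans (eb_ge Nf i) _.
  exact: ltnW (ltn_expl _ (leqnn 2)).
case: (ex_maxnP hex hub) => k Pk kmax.
have hKk : (Kk <= k)%N by apply: kmax.
case: k Pk kmax hKk => [|k] Pk kmax hKk; first by move: hKk; rewrite /Kk; lia.
have hn2 : (n < 2 ^ eb k.+2)%N.
  rewrite ltnNge; apply/negP => h; have := kmax _ h; lia.
have [Ki hKi] := @iter_rot R beta x n.
have ht : iter n (rotation beta) x - y = (x - y) + n%:R * beta - Ki%:~R.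
  by rewrite hKi; ring.
have hb := @block R Nf s Hf k (x - y) n (iter n (rotation beta) x - y) hz
  (hK k.+1 ltac:(rewrite /Kk in hKk; lia)) Pk hn2
  (ex_intro _ Ki ht).
apply: le_trans hb.
have : ((Num.Def.archi_bound `|L|) <= k.+1)%N by rewrite /Kk in hKk; lia.
rewrite -(ler_nat R) => h.
have := ler_norm L; lra.
Qed.

End Point.



Section Meas.
Variable R : realType.
Variable Nf : nat -> nat.
Local Notation lam := (@lebesgue_measure R).

Lemma lam_itv_oo (a b : R) : a < b -> lam `]a, b[%classic = (b - a)%:E.
Proof. by move=> ab; rewrite lebesgue_measure_itv /= lte_fin ab EFinB. Qed.

Lemma lam_01 : lam `[0, 1[%classic = 1%E.
Proof. by rewrite lebesgue_measure_itv /= lte_fin ltr01 ?sube0 ?subr0 ?EFinB ?sube0 ?subr0. Qed.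

Definition S01 : set (R * R) := `[0, 1[%classic `*` `[0, 1[%classic.
Definition Bk k : set (R * R) :=
  S01 `&` ((fun p : R * R => p.1 - p.2) @^-1` Uk R Nf k).

Lemma Uk_meas k : measurable (Uk R Nf k).
Proof. by apply: bigsetU_measurable => j _; exact: measurable_itv. Qed.

Lemma Bk_meas k : measurable (Bk k).
Proof.
apply: measurableI; first by apply: measurableX; exact: measurable_itv.
have mf : measurable_fun setT (fun p : R * R => p.1 - p.2).
  exact: measurable_realfun.measurable_funB measurable_fst measurable_snd.
rewrite -[X in measurable X]setTI; exact: (mf measurableT _ (Uk_meas k)).
Qed.

Lemma xsec_bound k x : (lam (xsection (Bk k) x) <=
  (((qn Nf k).*2.+1)%:R * (2 * rr R Nf k) * \1_`[0, 1[%classic x)%:E)%E.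
Proof.
have rr0 : 0 < rr R Nf k by rewrite /rr divr_gt0 ?w_gt0 ?pw_gt0.
rewrite indicE; case: (boolP (x \in `[0, 1[%classic)) => hx; last first.
  rewrite mulr0 (_ : xsection (Bk k) x = set0) ?measure0 //.
  apply/seteqP; split => y //=; rewrite /xsection /= in_setE /Bk => -[[h _] _].
  exact: (negP hx (mem_set h)).
rewrite mulr1.
pose F := fun j : nat => `](x - cen R Nf k j - rr R Nf k), (x - cen R Nf k j + rr R Nf k)[%classic.
apply: (le_trans (@content_subadditive _ _ _ lam (xsection (Bk k) x) F ((qn Nf k).*2.+1) _ _ _)).
- by move=> j _; exact: measurable_itv.
- exact: measurable_xsection (Bk_meas k).
- move=> y; rewrite /xsection /= in_setE /Bk => -[_ /=].
  rewrite /Uk -(bigcup_mkord _ (fun j : nat => `](cen R Nf k j - rr R Nf k), (cen R Nf k j + rr R Nf k)[%classic)).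
  move=> -[j /= hj].
  rewrite /= !in_itv /= => /andP[h1 h2].
  apply: (@bigsetU_sup _ j _ F hj).
  by rewrite /F /= in_itv /=; apply/andP; split; lra.
- rewrite (eq_bigr (fun=> (2 * rr R Nf k)%:E)); last first.
    move=> j _; rewrite /F.
    have h : x - cen R Nf k j - rr R Nf k < x - cen R Nf k j + rr R Nf k by lra.
    have := lam_itv_oo _ _ h.
    have -> : x - cen R Nf k j + rr R Nf k - (x - cen R Nf k j - rr R Nf k) = 2 * rr R Nf k by ring.
    move=> h2; exact: h2.
  by rewrite sumEFin lee_fin sumr_const card_ord !mulr_natl.
Qed.

Lemma Bk_bound k : ((lam \x lam) (Bk k) <= (6 / pw R k)%:E)%E.
Proof.
set C := ((qn Nf k).*2.+1)%:R * (2 * rr R Nf k).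
have w0 := w_gt0 R Nf k.
have C0 : 0 <= C by rewrite /C mulr_ge0 // mulr_ge0 // /rr divr_ge0 // ?(ltW w0) // ltW // pw_gt0.
apply: (le_trans (y := \int[lam]_x (C * \1_`[0, 1[%classic x)%:E)%E).
  apply: ge0_le_integral => //.
  - have hh := @measurable_fun_xsection _ _ _ _ _ lam _ (Bk_meas k). exact hh.
  - apply/measurable_realfun.measurable_EFinP.
    apply: measurable_realfun.measurable_funM => //.
  - move=> x _; exact: xsec_bound.
rewrite (integralZl_indic measurableT (fun=> (`[0, 1[%classic : set (measurableTypeR R)))) //=; last first.
  by move=> hC; move: C0; rewrite leNgt hC.
rewrite integral_indic // setIT [X in (_ * X <= _)%E]lam_01.
rewrite mule1 lee_fin.
rewrite /C /rr.
have qw : (qn Nf k)%:R * w R Nf k = 1 := pwmw R Nf k.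
have w1 : w R Nf k <= 1 by rewrite /w invf_le1 ?pw_gt0 ?pw_ge1.
have hp := pw_gt0 R k.
have e : ((qn Nf k).*2.+1)%:R = 2 * (qn Nf k)%:R + 1 :> R.
  by rewrite -addn1 -muln2 natrD natrM mulrC.
rewrite e.
rewrite (_ : (2 * (qn Nf k)%:R + 1) * (2 * (w R Nf k / pw R k)) =
   (((qn Nf k)%:R * w R Nf k) * 4 + 2 * w R Nf k) / pw R k); last by field; exact: lt0r_neq0.
rewrite qw ler_pM2r ?invr_gt0 //; lra.
Qed.

Lemma sum_finite : (\sum_(0 <= k <oo) (lam \x lam) (Bk k) < +oo)%E.
Proof.
apply: (le_lt_trans (y := 12%:E)); last exact: ltry.
apply: lime_le.
  by apply: is_cvg_nneseries => n _ _; exact: measure_ge0.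
apply: nearW => N.
apply: (le_trans (y := \sum_(0 <= k < N) (6 / pw R k)%:E)%E).
  by apply: lee_sum => k _; exact: Bk_bound.
rewrite sumEFin lee_fin.
have v0 : forall i, 0 <= 6 / pw R i by move=> i; rewrite divr_ge0 // ltW // pw_gt0.
have v2 : forall i, 2 * (6 / pw R i.+1) <= 6 / pw R i.
  move=> i; have -> : pw R i.+1 = pw R i * 2 by rewrite -addn1 pwD /pw expn1.
  rewrite le_eqVlt; apply/orP; left; apply/eqP; field.
  exact: lt0r_neq0 (pw_gt0 R i).
have := @geo R (fun i => 6 / pw R i) v0 v2 0 N; rewrite add0n.
have := v0 N; rewrite (_ : pw R 0 = 1); last by rewrite /pw expn0.
lra.
Qed.

Definition Anull : set (R * R) := \bigcap_(K in [set: nat]) \bigcup_(k in ~` `I_K) Bk k.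

Lemma Anull_meas : measurable Anull.
Proof.
apply: bigcap_measurable; first by exists 0%N.
move=> K _; apply: bigcup_measurable => k _; exact: Bk_meas.
Qed.

Lemma Anull0 : ((lam \x lam) Anull = 0)%E.
Proof.
apply/eqP; rewrite eq_le measure_ge0 andbT.
have htail := nneseries_tail_cvg sum_finite (fun k _ => measure_ge0 _ _).
rewrite -(cvg_lim _ htail) //.
apply: lime_ge; first by apply/cvg_ex; exists 0%E.
apply: nearW => N.
apply: measure_sigma_subadditive_tail.
- exact: Bk_meas.
- exact: Anull_meas.
- by move=> p hp; exact: hp N I.
Qed.

End Meas.



Theorem theorem4p7 (R : realType) (s : nat -> R)
  (s_pos : forall n : nat, (0 < n)%N -> 0 < s n)
  (s_super : (fun n : nat => s n / n%:R) @ \oo --> +oo) :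
  exists beta : R, (@irrational R) beta /\
    {ae ((@lebesgue_measure R) \x (@lebesgue_measure R))%E,
      forall p : R * R,
        p.1 \in `[0, 1[ -> p.2 \in `[0, 1[ ->
        limn_einf (fun n : nat =>
          (s n * dist_int (iter n (rotation beta) p.1 - p.2))%:E) = +oo%E}.
Proof.
have Hex : forall M : nat, exists N : nat, forall n, (N <= n)%N -> M%:R <= s n / n%:R.
  move=> M; have [N _ HN] := (cvgryPge _).1 s_super M%:R.
  by exists N => n hn; exact: HN.
pose Nf := fun M => proj1_sig (cid (Hex M)).
have Hf : forall M n, (Nf M <= n)%N -> M%:R <= s n / n%:R.
  by move=> M; exact: (proj2_sig (cid (Hex M))).
exists (beta R Nf); split; first exact: beta_irr.
exists (Anull R Nf); split; [exact: Anull_meas | exact: Anull0 |].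
move=> p /= hp K _.
apply: contrapT => hK; apply: hp => h1 h2.
have h1' := h1; have h2' := h2.
move: h1 h2; rewrite !in_itv /= => h1 h2.
apply: (@pointwise R Nf s Hf p.1 p.2 h1 h2 K).
move=> k hk hU; apply: hK; exists k; first by rewrite /=; lia.
rewrite /Bk; split; last exact hU.
by split.
Qed.
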